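(* Let $r_2\geq 4$ be an even integer. Then there is no graph with parameters $(r_2,r_3)$ for any integer $r_3$ with $4\binom{r_2/2}{2}<r_3<\binom{r_2}{2}$ or $\binom{r_2-1}{2}<r_3<4\binom{r_2/2}{2}$. Moreover, $K_{r_2+1}$ has parameters $(r_2,\binom{r_2}{2})$, $\operatorname{Turan}(r_2+2, r_2/2+1)$ has parameters $(r_2, 4\binom{r_2/2}{2})$, and $K_{r_2}\square K_2$ has parameters $(r_2,\binom{r_2-1}{2})$.
   Context: All graphs are finite, simple and undirected. The $K_3$-degree of a vertex $v$ is the number of triangles containing $v$. A graph $G$ has parameters $(r_2,r_3)$ if every vertex has degree $r_2$ and every vertex has $K_3$-degree $r_3$. $K_n$ is the complete graph on $n$ vertices. For $r\mid n$, $\operatorname{Turan}(n,r)$ is the complete multipartite graph on $n$ vertices with $r$ parts each of size $n/r$. The Cartesian product $G_1\square G_2$ has vertex set $V(G_1)\times V(G_2)$, with $(u,v)$ and $(u',v')$ adjacent iff either $u=u'$ and $vv'\in E(G_2)$, or $v=v'$ and $uu'\in E(G_1)$. *)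

(* Defs.v *)
From mathcomp Require Import all_boot.
Set Implicit Arguments. Unset Strict Implicit. Unset Printing Implicit Defensive.

Definition simple_graph (T : finType) (e : rel T) : Prop :=
  symmetric e /\ irreflexive e.

Definition deg (T : finType) (e : rel T) (v : T) : nat := #|[set u | e v u]|.

Definition clique (T : finType) (e : rel T) (S : {set T}) : bool :=
  [forall x in S, forall y in S, (x != y) ==> e x y].

Definition k3deg (T : finType) (e : rel T) (v : T) : nat :=
  #|[set S : {set T} | [&& #|S| == 3, v \in S & clique e S]]|.

Definition has_params (T : finType) (e : rel T) (r2 r3 : nat) : Prop :=
  forall v : T, deg e v = r2 /\ k3deg e v = r3.

Definition complete_graph (n : nat) : rel 'I_n := fun x y => x != y.

(* Turan(n, r): complete multipartite, parts {k*s, ..., k*s + s - 1}, s = n/r *)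
Definition turan (n r : nat) : rel 'I_n :=
  fun x y => (x %/ (n %/ r)) != (y %/ (n %/ r)).

Definition cartesian (T1 T2 : finType) (e1 : rel T1) (e2 : rel T2) : rel (T1 * T2) :=
  fun p q => ((p.1 == q.1) && e2 p.2 q.2) || ((p.2 == q.2) && e1 p.1 q.1).
Arguments complete_graph n : clear implicits.
Arguments turan n r : clear implicits.

(* Main.v *)
Require Import Defs.
From mathcomp Require Import all_boot.
From mathcomp Require Import zify.
Set Implicit Arguments. Unset Strict Implicit. Unset Printing Implicit Defensive.


Definition nb (T : finType) (e : rel T) (v : T) : {set T} := [set u | e v u].

Lemma sumb_card (T : finType) (P : pred T) : \sum_(b : T) (P b : nat) = #|P|.
Proof. rewrite -sum1_card [RHS]big_mkcond /=. apply: eq_bigr => i _. rewrite unfold_in; by case: (P i). Qed.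

Lemma card_sumb (T : finType) (A : {set T}) : #|A| = \sum_(b : T) (b \in A : nat).
Proof. rewrite (sumb_card (fun b => b \in A)). by apply: eq_card => x. Qed.

Lemma tri_set_in (T : finType) (e : rel T) (esym : symmetric e) (eirr : irreflexive e) v a b :
  e v a -> e v b -> e a b ->
  [set v; a; b] \in [set S : {set T} | [&& #|S| == 3, v \in S & clique e S]].
Proof.
move=> va vb ab.
have nva : v != a by apply: contraTneq va => ->; rewrite eirr.
have nvb : v != b by apply: contraTneq vb => ->; rewrite eirr.
have nab : a != b by apply: contraTneq ab => ->; rewrite eirr.
rewrite inE; apply/and3P; split.
- have -> : [set v; a; b] = v |: (a |: [set b]) by apply/setP => z; rewrite !inE orbA.
  rewrite cardsU1 cardsU1 cards1 !inE (negPf nva) (negPf nvb) (negPf nab) //.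
- by rewrite !inE eqxx.
apply/forallP => x; apply/implyP => hx; apply/forallP => y; apply/implyP => hy.
apply/implyP => nxy.
move: hx hy nxy; rewrite !inE -!orbA => /or3P [] /eqP -> /or3P [] /eqP ->; 
  rewrite ?eqxx //; by rewrite esym.
Qed.

Lemma sum1_pred (T : finType) (P : pred T) : \sum_(i | P i) 1 = #|P|.
Proof. rewrite big_mkcond /= -sumb_card; apply: eq_bigr => i _; by case: (P i). Qed.

Lemma tri_pairs (T : finType) (e : rel T) (esym : symmetric e) (eirr : irreflexive e) v :
  \sum_(p : T * T) ((e v p.1 && e v p.2 && e p.1 p.2) : nat) = 2 * k3deg e v.
Proof.
set Tri := [set S : {set T} | [&& #|S| == 3, v \in S & clique e S]].
rewrite /k3deg -/Tri.
have -> : \sum_(p : T * T) ((e v p.1 && e v p.2 && e p.1 p.2) : nat)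
    = \sum_(p : T * T | e v p.1 && e v p.2 && e p.1 p.2) 1.
  by rewrite [RHS]big_mkcond; apply: eq_bigr => p _; case: (_ && _).
rewrite (partition_big (fun p : T*T => [set v; p.1; p.2]) predT) //=.
rewrite (card_sumb Tri) big_distrr /=. apply: eq_bigr => S _.
rewrite sum1_pred.
case: (boolP (S \in Tri)) => hS.
- move: (hS); rewrite inE => /and3P [/eqP c3 vS cl].
  have : #|S :\ v| == 2 by move: c3; rewrite (cardsD1 v) vS /=; lia.
  case/cards2P => a0 [b0 [nab0 hS2]].
  have defS : S = [set v; a0; b0].
    by rewrite -(setD1K vS) hS2; apply/setP => z; rewrite !inE orbA.
  have a0S : a0 \in S :\ v by rewrite hS2 !inE eqxx.
  have b0S : b0 \in S :\ v by rewrite hS2 !inE eqxx orbT.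
  rewrite !inE in a0S b0S; case/andP: a0S => na0v a0S; case/andP: b0S => nb0v b0S.
  have cle : forall x y, x \in S -> y \in S -> x != y -> e x y.
    move=> x y hx hy nxy; move/forallP: cl => /(_ x); rewrite hx /= => /forallP/(_ y).
    by rewrite hy nxy.
  rewrite (eq_card (B := [set (a0,b0); (b0,a0)])).
  + rewrite cards2 muln1; congr (_.+1).
    apply/eqP; rewrite eqb1; apply: contra nab0 => /eqP [-> _] //.
  + move=> [a b] /=; rewrite !inE.
    apply/idP/idP.
    * case/andP => /andP [/andP [va vb] ab] /eqP hSab.
      have ha : a \in [set v; a0; b0] by rewrite -defS -hSab !inE eqxx ?orbT.
      have hb : b \in [set v; a0; b0] by rewrite -defS -hSab !inE eqxx !orbT.
      move: ha hb va vb ab; rewrite !inE -!orbA => /or3P [] /eqP -> /or3P [] /eqP -> ;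
        by rewrite ?eirr ?eqxx ?orbT.
    * have va0 : e v a0 by apply: cle; rewrite // eq_sym.
      have vb0 : e v b0 by apply: cle; rewrite // eq_sym.
      have ab0 : e a0 b0 by apply: cle.
      case/orP => /eqP [-> ->] /=.
      - by rewrite unfold_in /= va0 vb0 ab0 defS eqxx.
      - rewrite unfold_in /= va0 vb0 esym ab0 defS /=; apply/eqP/setP => z; rewrite !inE.
        by case: (z == v); case: (z == a0); case: (z == b0).
- rewrite muln0; apply: eq_card0 => [[a b]]; rewrite unfold_in /=.
  apply/negP => /andP [/andP [/andP [va vb] ab] /eqP hSab].
  by apply: (negP hS); rewrite -hSab; apply: tri_set_in.
Qed.

Definition tS (T : finType) (e : rel T) (S : {set T}) (a : T) := #|S :\ a :\: nb e a|.
Definition NA (T : finType) (e : rel T) (S : {set T}) := \sum_(a in S) tS e S a.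
Definition H (T : finType) (e : rel T) (S : {set T}) (a b : T) : nat :=
  [&& a \in S, b \in S, b != a & ~~ e a b].

Lemma L0 (T : finType) (e : rel T) (S : {set T}) a : a \in S ->
  #|(S :\ a) :&: nb e a| + tS e S a = #|S| - 1.
Proof. move=> aS; rewrite /tS cardsID (cardsD1 a S) aS; lia. Qed.

Lemma rowtri (T : finType) (e : rel T) (esym : symmetric e) (eirr : irreflexive e) v :
  \sum_(a in nb e v) #|(nb e v :\ a) :&: nb e a| = 2 * k3deg e v.
Proof.
rewrite -tri_pairs // -(pair_bigA _ (fun a b => (e v a && e v b && e a b : nat))) big_mkcond /=.
apply: eq_bigr => a _; rewrite inE; case: (e v a) => /=.
- rewrite card_sumb; apply: eq_bigr => b _; rewrite !inE.
  by case: (eqVneq b a) => [->|]; rewrite ?eirr ?andbF.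
- by rewrite big1.
Qed.

Lemma F1 (T : finType) (e : rel T) (esym : symmetric e) (eirr : irreflexive e) v d :
  #|nb e v| = d -> NA e (nb e v) + 2 * k3deg e v = d * (d - 1).
Proof.
move=> hd; rewrite /NA -rowtri // -big_split /=.
rewrite (eq_bigr (fun _ => d - 1)); first by rewrite sum_nat_const hd.
by move=> a aN; rewrite addnC L0 // hd.
Qed.

Lemma row_H (T : finType) (e : rel T) (S : {set T}) a :
  \sum_b H e S a b = (a \in S) * tS e S a.
Proof.
case: (boolP (a \in S)) => aS /=.
- rewrite mul1n /tS card_sumb; apply: eq_bigr => b _; rewrite /H !inE aS /=.
  by case: (b \in S); case: (b != a); case: (e a b).
- by rewrite big1 // => b _; rewrite /H (negPf aS).
Qed.

Lemma H_sym (T : finType) (e : rel T) (esym : symmetric e) S a b : H e S a b = H e S b a.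
Proof. by rewrite /H esym eq_sym; case: (a \in S); case: (b \in S). Qed.

Lemma NA_double (T : finType) (e : rel T) (S : {set T}) :
  NA e S = \sum_a \sum_b H e S a b.
Proof.
rewrite /NA big_mkcond /=; apply: eq_bigr => a _; rewrite row_H.
by case: (a \in S); rewrite ?mul1n ?mul0n.
Qed.

Lemma sum_eq1 (T : finType) (F : T -> nat) v : \sum_a ((a == v) * F a) = F v.
Proof. rewrite (bigD1 v) //= eqxx mul1n big1 ?addn0 // => a /negPf ->. by rewrite mul0n. Qed.

Lemma sum_in (T : finType) (A : {set T}) c : \sum_a ((a \in A) * c) = #|A| * c.
Proof. by rewrite card_sumb big_distrl. Qed.

Lemma tlow (T : finType) (e : rel T) (eirr : irreflexive e) (S Z : {set T}) a :
  a \in S -> (forall z, z \in Z -> e a z && (z \notin S)) ->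
  #|S| - 1 + #|Z| <= tS e S a + #|nb e a|.
Proof.
move=> aS hZ; have := L0 e aS.
set X := (S :\ a) :&: nb e a => hX.
have hsub : X :|: Z \subset nb e a.
  apply/subsetP => z; rewrite !inE => /orP [/andP [_ ->] //|/hZ /andP [] //].
have hI : #|X :&: Z| = 0.
  apply: eq_card0 => z; rewrite !inE; apply/negP => /andP [/andP [/andP [_ zS] _] /hZ].
  by rewrite zS andbF.
have := cardsUI X Z; rewrite hI addn0 => hU.
have := subset_leq_card hsub; rewrite hU; lia.
Qed.

Lemma outside (T : finType) (e : rel T) (eirr : irreflexive e) v a (Z : {set T}) :
  e v a -> #|Z| < tS e (nb e v) a -> #|nb e v| <= #|nb e a| ->
  exists x, [&& e a x, x != v, ~~ e v x & x \notin Z].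
Proof.
move=> va hZ hd.
have aN : a \in nb e v by rewrite inE.
have := L0 e aN; set X := (nb e v :\ a) :&: nb e a => hX.
apply/existsP; apply: contraTT hd; rewrite negb_exists => /forallP hn.
have hsub : nb e a \subset v |: (X :|: Z).
  apply/subsetP => z; rewrite !inE => az; move: (hn z); rewrite az /=.
  case: (eqVneq z v) => //= zv; case: (boolP (e v z)) => //= vz.
  - rewrite orbC (_ : z != a) ?orbT //; by apply: contraTneq az => ->; rewrite eirr.
  - by rewrite andbT negbK => ->; rewrite !orbT.
have := subset_leq_card hsub; rewrite -ltnNge.
have h1 : #|X :|: Z| <= #|X| + #|Z| by case: (leq_card_setU X Z).
move=> h2.
have := cardsU1 v (X :|: Z); case: (v \notin _) => /= h3; lia.
Qed.

Lemma bool1 (A1 A2 B1 B2 h : bool) : ~~ (A1 && A2) -> ~~ (B1 && B2) ->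
  (A1 && B2 -> h) -> (A2 && B1 -> h) -> (A1 && B1 -> ~~ h) -> (A2 && B2 -> ~~ h) ->
  (A1 + A2) * h + (B1 + B2) * h <= h + (A1 && B2) + (A2 && B1).
Proof. case: A1; case: A2; case: B1; case: B2; case: h => //= _ _ h1 h2 h3 h4;
  by [move: (h1 isT) | move: (h2 isT) | move: (h3 isT) | move: (h4 isT)]. Qed.

Lemma bool2 (va xa vb xb c1 c2 : bool) :
  (va && xa) * [&& va || xa, vb || xb, c1 & c2] + (vb && xb) * [&& va || xa, vb || xb, c1 & c2]
  <= [&& va, vb, c1 & c2] + [&& xa, xb, c1 & c2].
Proof. by case: va; case: xa; case: vb; case: xb; case: c1; case: c2. Qed.

Lemma dsum_le (T : finType) (F G : T -> T -> nat) :
  (forall a b, F a b <= G a b) -> \sum_a \sum_b F a b <= \sum_a \sum_b G a b.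
Proof. by move=> h; apply: leq_sum => a _; apply: leq_sum => b _; apply: h. Qed.

Lemma dsumD (T : finType) (F G : T -> T -> nat) :
  \sum_a \sum_b (F a b + G a b) = \sum_a \sum_b F a b + \sum_a \sum_b G a b.
Proof. rewrite -big_split /=; apply: eq_bigr => a _; by rewrite big_split. Qed.

Lemma rowrow (T : finType) (e : rel T) S (f : T -> nat) :
  \sum_a \sum_b (f a * H e S a b) = \sum_a (f a * ((a \in S) * tS e S a)).
Proof. apply: eq_bigr => a _; by rewrite -big_distrr /= row_H. Qed.

Lemma colrow (T : finType) (e : rel T) (esym : symmetric e) S (f : T -> nat) :
  \sum_a \sum_b (f b * H e S a b) = \sum_a (f a * ((a \in S) * tS e S a)).
Proof.
rewrite exchange_big; apply: eq_bigr => a _; rewrite -big_distrr /= -row_H.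
by congr (_ * _); apply: eq_bigr => b _; rewrite H_sym.
Qed.

Lemma pair_one (T : finType) (u w : T) : \sum_a \sum_b ((a == u) && (b == w) : nat) = 1.
Proof.
rewrite (eq_bigr (fun a => (a == u) * 1)) ?sum_eq1 // => a _.
rewrite (eq_bigr (fun b => (b == w) * (a == u))) ?sum_eq1 ?muln1 // => b _.
by case: (a == u); case: (b == w).
Qed.

Lemma sum2 (T : finType) (f : T -> nat) v x :
  \sum_a (((a == v) + (a == x)) * f a) = f v + f x.
Proof. rewrite (eq_bigr (fun a => (a == v) * f a + (a == x) * f a)) ?big_split ?sum_eq1 //= => a _; by rewrite mulnDl. Qed.

Lemma keyB (T : finType) (e : rel T) (esym : symmetric e) (eirr : irreflexive e) d M
  (hdeg : forall v, #|nb e v| = d) (hM : forall v, NA e (nb e v) = M) (hMlt : M < 2 * (d - 1))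
  v x : x != v -> ~~ e v x -> 0 < #|nb e v :&: nb e x| -> #|nb e v :&: nb e x| = d.
Proof.
move=> nxv nvx.
set P := nb e v :&: nb e x; set p := #|P|.
case/card_gt0P => w wP.
have [vw xw] : e w v /\ e w x by move: wP; rewrite !inE esym [e x w]esym => /andP.
have nxv' : ~~ e x v by rewrite esym.
have pled : p <= d by rewrite -(hdeg v); apply: subset_leq_card; apply: subsetIl.
set Nw := nb e w.
have vNw : v \in Nw by rewrite inE.
have xNw : x \in Nw by rewrite inE.
have S1 : 2 * (tS e Nw v + tS e Nw x) <= M + 2.
  have := @dsum_le T (fun a b => ((a == v) + (a == x)) * H e Nw a b + ((b == v) + (b == x)) * H e Nw a b)
     (fun a b => H e Nw a b + ((a == v) && (b == x)) + ((a == x) && (b == v))).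
  rewrite !dsumD pair_one pair_one (rowrow e Nw (fun a => (a == v) + (a == x))).
  rewrite (colrow esym Nw (fun a => (a == v) + (a == x))) -(NA_double e Nw) hM !sum2 vNw xNw !mul1n.
  move=> h; have : (tS e Nw v + tS e Nw x) + (tS e Nw v + tS e Nw x) <= M + 1 + 1.
    apply: leq_trans (h _); first by rewrite addnACA.
    move=> a b; apply: bool1.
    - by case: (eqVneq a v) => // ->; rewrite eq_sym (negPf nxv).
    - by case: (eqVneq b v) => // ->; rewrite eq_sym (negPf nxv).
    - by case/andP => /eqP -> /eqP ->; rewrite /H vNw xNw nxv nvx.
    - by case/andP => /eqP -> /eqP ->; rewrite /H vNw xNw eq_sym nxv nxv'.
    - by case/andP => /eqP -> /eqP ->; rewrite /H eqxx !andbF.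
    - by case/andP => /eqP -> /eqP ->; rewrite /H eqxx !andbF.
  lia.
set A := (Nw :\ v) :&: nb e v; set B := (Nw :\ x) :&: nb e x.
have hA := L0 e vNw; have hB := L0 e xNw; rewrite -/A -/B hdeg in hA hB.
have hAB : #|A :|: B| <= #|(Nw :\ v) :\ x|.
  apply: subset_leq_card; apply/subsetP => z; rewrite !inE.
  case/orP => /andP [/andP [zv wz] hz].
  - rewrite zv wz !andbT; apply/eqP => zx; move: hz; by rewrite zx (negPf nvx).
  - rewrite wz zv !andbT; apply/eqP => zv'; move: hz; by rewrite zv' (negPf nxv').
have hW : #|Nw| = 1 + (1 + #|(Nw :\ v) :\ x|).
  by rewrite (cardsD1 v Nw) vNw (cardsD1 x (Nw :\ v)) !inE nxv xw.
have hI : #|A :&: B| <= #|P :\ w|.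
  apply: subset_leq_card; apply/subsetP => z; rewrite !inE.
  case/andP => /andP [/andP [_ wz] vz] /andP [_ xz]; rewrite vz xz andbT.
  rewrite ?andbT; apply/eqP => zw; move: wz; by rewrite zw eirr.
have hP : p = 1 + #|P :\ w| by rewrite /p (cardsD1 w P) wP.
have hUI := cardsUI A B.
have hwd := hdeg w; rewrite -/Nw in hwd.
have p2 : 2 <= p by lia.
set U := nb e v :|: nb e x.
have hU : #|U| + p = d + d by rewrite cardsUI !hdeg.
have S2 : p * (d - p + 1) + p * (d - p + 1) <= M + M.
  have := @dsum_le T (fun a b => (a \in P) * H e U a b + (b \in P) * H e U a b)
     (fun a b => H e (nb e v) a b + H e (nb e x) a b).
  rewrite !dsumD rowrow (colrow esym) -!NA_double !hM => h.
  apply: leq_trans (h _); last first.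
    move=> a b; rewrite /H !inE; exact: bool2.
  have lowa : forall a, (a \in P) * (d - p + 1) <= (a \in P) * ((a \in U) * tS e U a).
    move=> a; case: (boolP (a \in P)) => aP; rewrite ?mul0n // !mul1n.
    have aU : a \in U by move: aP; rewrite !inE => /andP [->].
    rewrite aU mul1n.
    have := @tlow T e eirr U [set v; x] a aU.
    rewrite cards2 eq_sym nxv hdeg.
    have hz : forall z, z \in [set v; x] -> e a z && (z \notin U).
      move: aP; rewrite !inE => /andP [va xa] z; rewrite !inE => /orP [] /eqP ->.
      - rewrite esym va eirr /=; exact: nxv'.
      - by rewrite esym xa eirr (negPf nvx).
    move/(_ hz); lia.
  have h2 : \sum_a ((a \in P) * (d - p + 1)) <= \sum_a ((a \in P) * ((a \in U) * tS e U a)).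
    by apply: leq_sum => a _; exact: lowa.
  rewrite sum_in -/p in h2.
  by apply: leq_add.
have : p * (d - p + 1) <= M by lia.
case: (ltngtP p d) => // hpd; last by lia.
move=> h; exfalso.
have key : forall p0 q0 : nat, 2 <= p0 -> 1 <= q0 -> 2 * (p0 + q0 - 1) <= p0 * (q0 + 1).
  move=> p0 q0 h1 h2; nia.
have k := key p (d - p) p2; have k' := k ltac:(lia); lia.
Qed.

Lemma sub_from_card (T : finType) (e : rel T) v x :
  #|nb e v :&: nb e x| = #|nb e v| -> forall b, e v b -> e x b.
Proof.
move=> hc b vb.
have := subset_cardP hc (subsetIl _ _) => /(_ b).
by rewrite !inE vb /= => ->.
Qed.

Lemma no_graph (T : finType) (e : rel T) (esym : symmetric e) (eirr : irreflexive e) d r3 :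
  has_params e d r3 -> 0 < #|T| ->
  2 * r3 < d * (d - 1) -> d * (d - 1) < 2 * r3 + 2 * (d - 1) -> d * (d - 1) != 2 * r3 + d -> False.
Proof.
move=> hp hT h1 h2 h3.
have hdeg : forall v, #|nb e v| = d by move=> v; case: (hp v).
set M := d * (d - 1) - 2 * r3.
have hM : forall v, NA e (nb e v) = M.
  move=> v; have := F1 esym eirr (hdeg v); case: (hp v) => _ ->; rewrite /M; lia.
have hMlt : M < 2 * (d - 1) by rewrite /M; lia.
have hM0 : 0 < M by rewrite /M; lia.
have hMd : M != d by rewrite /M; lia.
have kB := keyB esym eirr hdeg hM hMlt.
case/card_gt0P: hT => v _.
have [a aN ta] : exists2 a, a \in nb e v & 0 < tS e (nb e v) a.
  case: (pickP (fun a => (a \in nb e v) && (0 < tS e (nb e v) a))) => [a /andP [h h'] | hn].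
    by exists a.
  exfalso; move: hM0; rewrite -(hM v) /NA big1 // => a aN.
  by move: (hn a); rewrite aN /= lt0n => /negbFE /eqP.
have va : e v a by move: aN; rewrite inE.
have [x /and4P [ax xv nvx _]] := outside eirr (Z := set0) va ltac:(by rewrite cards0) ltac:(by rewrite !hdeg).
have px : 0 < #|nb e v :&: nb e x| by apply/card_gt0P; exists a; rewrite !inE va esym ax.
have := kB v x xv nvx px; rewrite -(hdeg v) => /sub_from_card subx.
have low : forall b (Z : {set T}), e v b -> (forall z, z \in Z -> e b z && (z \notin nb e v)) ->
    #|Z| <= (tS e (nb e v) b).+1.
  move=> b Z vb hZ; have bN : b \in nb e v by rewrite inE.
  have := tlow eirr bN hZ; rewrite !hdeg; lia.
have nxv' : ~~ e x v by rewrite esym.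
have lb1 : forall b, e v b -> 1 <= tS e (nb e v) b.
  move=> b vb; have := low b [set v; x] vb.
  rewrite cards2 eq_sym xv => h; apply: h => z; rewrite !inE => /orP [] /eqP ->.
  - by rewrite esym vb eirr.
  - by rewrite esym subx // nvx.
have [b bN tb] : exists2 b, b \in nb e v & 2 <= tS e (nb e v) b.
  case: (pickP (fun b => (b \in nb e v) && (2 <= tS e (nb e v) b))) => [b /andP [h h'] | hn].
    by exists b.
  exfalso; move: hMd; rewrite -(hM v) /NA.
  have -> : \sum_(b in nb e v) tS e (nb e v) b = \sum_(b in nb e v) 1.
    apply: eq_bigr => b bN; have := hn b; rewrite bN /= => /negbT; rewrite -ltnNge.
    have := lb1 b; rewrite inE in bN => /(_ bN); lia.
  by rewrite sum_nat_const muln1 hdeg eqxx.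
have vb : e v b by move: bN; rewrite inE.
have [y /and4P [by_ yv nvy yx]] := outside eirr (Z := [set x]) vb ltac:(by rewrite cards1) ltac:(by rewrite !hdeg).
rewrite inE in yx.
have py : 0 < #|nb e v :&: nb e y| by apply/card_gt0P; exists b; rewrite !inE vb esym by_.
have := kB v y yv nvy py; rewrite -(hdeg v) => /sub_from_card suby.
have nyv' : ~~ e y v by rewrite esym.
have lb2 : forall b, e v b -> 2 <= tS e (nb e v) b.
  move=> b' vb'; have := low b' [set v; x; y] vb'.
  have -> : #|[set v; x; y]| = 3.
    have -> : [set v; x; y] = v |: (x |: [set y]) by apply/setP => z; rewrite !inE orbA.
    rewrite cardsU1 cardsU1 cards1 !inE (eq_sym v x) (eq_sym v y) (negPf xv) (negPf yv) eq_sym yx //.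
  move=> h; suff : 3 <= (tS e (nb e v) b').+1 by [].
  apply: h => z; rewrite !inE -!orbA => /or3P [] /eqP ->.
  - by rewrite esym vb' eirr.
  - by rewrite esym subx // nvx.
  - by rewrite esym suby // nvy.
have : \sum_(b in nb e v) 2 <= \sum_(b in nb e v) tS e (nb e v) b.
  by apply: leq_sum => b' bN'; apply: lb2; rewrite inE in bN'.
rewrite sum_nat_const hdeg -/(NA e (nb e v)) hM; lia.
Qed.


Lemma bin2x (n : nat) : 'C(n, 2) * 2 = n * (n - 1).
Proof.
elim: n => [//|n IH]. rewrite binS bin1 mulnDl IH; case: n {IH} => [//|n]; rewrite !subn1 /=; nia.
Qed.

Lemma neg_part (r2 : nat) (Heven : ~~ odd r2) (H4 : 4 <= r2) :
  (forall r3 : nat,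
      (4 * 'C(r2 %/ 2, 2) < r3 < 'C(r2, 2)) || ('C(r2 - 1, 2) < r3 < 4 * 'C(r2 %/ 2, 2)) ->
      forall (T : finType) (e : rel T), simple_graph e -> 0 < #|T| ->
        ~ has_params e r2 r3).
Proof.
move=> r3 hr T e [esym eirr] hT hp.
have c1 := bin2x r2; have c2 := bin2x (r2 - 1); have c3 := bin2x (r2 %/ 2).
have hk : r2 = r2 %/ 2 + r2 %/ 2.
  by rewrite divn2 addnn -{1}(odd_double_half r2) (negPf Heven) add0n.
have f1 : r2 * (r2 - 1) = (r2 - 1) * (r2 - 1 - 1) + 2 * (r2 - 1).
  have -> : r2 = (r2 - 2).+2 by lia. rewrite !subSS !subn0 /=; nia.
have f2 : 4 * ((r2 %/ 2) * (r2 %/ 2 - 1)) + r2 = r2 * (r2 - 1).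
  move: hk; move: (r2 %/ 2) => k ->. case: k => [//|k]; rewrite !subn1 /=; nia.
apply: (no_graph esym eirr hp hT).
- move: hr => /orP [] /andP [h1 h2]; lia.
- move: hr => /orP [] /andP [h1 h2]; lia.
- move: hr => /orP [] /andP [h1 h2]; apply/eqP => h; lia.
Qed.


Lemma common_sum (T : finType) (e : rel T) (eirr : irreflexive e) v a :
  #|(nb e v :\ a) :&: nb e a| = \sum_q ((e v q && e a q) : nat).
Proof.
rewrite card_sumb; apply: eq_bigr => q _; rewrite !inE.
by case: (eqVneq q a) => [->|]; rewrite ?eirr ?andbF.
Qed.

Lemma sum_neq (T : finType) (v : T) : \sum_u ((v != u) : nat) = #|T| - 1.
Proof.
have -> : \sum_u ((v != u) : nat) = \sum_(u | u != v) 1.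
  by rewrite [RHS]big_mkcond; apply: eq_bigr => u _; rewrite eq_sym; case: (u != v).
by rewrite sum1_pred cardC1 subn1.
Qed.

Lemma sum_eqv (T : finType) (v : T) : \sum_u ((v == u) : nat) = 1.
Proof.
rewrite (eq_bigr (fun u => (u == v) * 1)) ?sum_eq1 // => u _.
by rewrite muln1 eq_sym.
Qed.

Lemma card_nb_sum (T : finType) (e : rel T) v : #|nb e v| = \sum_u (e v u : nat).
Proof. by rewrite card_sumb; apply: eq_bigr => u _; rewrite inE. Qed.

Lemma cardC2 (T : finType) (x y : T) : x != y -> #|~: [set x; y]| = #|T| - 2.
Proof. move=> nxy; have := cardsC [set x; y]; rewrite cards2 nxy; lia. Qed.

Lemma complete_params d : has_params (complete_graph d.+1) d 'C(d, 2).
Proof.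
set e := complete_graph d.+1.
have esym : symmetric e by move=> x y; rewrite /e /complete_graph eq_sym.
have eirr : irreflexive e by move=> x; rewrite /e /complete_graph eqxx.
have hdeg : forall v, #|nb e v| = d.
  by move=> v; rewrite card_nb_sum sum_neq card_ord subn1.
move=> v; split; first exact: hdeg.
have := rowtri esym eirr v.
rewrite (eq_bigr (fun _ => d - 1)) ?sum_nat_const ?hdeg.
  by have := bin2x d; lia.
move=> a; rewrite inE => va.
have -> : (nb e v :\ a) :&: nb e a = ~: [set v; a].
  apply/setP => q; rewrite !inE /e /complete_graph.
  by rewrite negb_or (eq_sym v q) (eq_sym a q); case: (q != a); case: (q != v).
by rewrite cardC2 // card_ord; lia.
Qed.

Lemma turan_params r2 (Heven : ~~ odd r2) (H4 : 4 <= r2) :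
  has_params (turan (r2 + 2) (r2 %/ 2 + 1)) r2 (4 * 'C(r2 %/ 2, 2)).
Proof.
have hk : r2 = r2 %/ 2 + r2 %/ 2.
  by rewrite divn2 addnn -{1}(odd_double_half r2) (negPf Heven) add0n.
have hdiv : (r2 + 2) %/ (r2 %/ 2 + 1) = 2.
  have -> : r2 + 2 = 2 * (r2 %/ 2 + 1) by lia.
  by rewrite mulnK // addn1.
set n := r2 + 2.
set e := turan n (r2 %/ 2 + 1).
have eE : forall x y, e x y = (x %/ 2 != y %/ 2) by move=> x y; rewrite /e /turan hdiv.
have esym : symmetric e by move=> x y; rewrite !eE eq_sym.
have eirr : irreflexive e by move=> x; rewrite eE eqxx.
pose B (v : 'I_n) := [set u : 'I_n | u %/ 2 == v %/ 2].
have cB : forall v, #|B v| = 2.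
  move=> v; have hv := ltn_ord v.
  have h0 : 2 * (v %/ 2) < n by rewrite /n in hv *; lia.
  have h1 : 2 * (v %/ 2) + 1 < n by rewrite /n in hv *; lia.
  have -> : B v = [set Ordinal h0; Ordinal h1].
    apply/setP => u; rewrite !inE -!val_eqE /=.
    apply/eqP/orP => [h|[/eqP h|/eqP h]]; last 2 first.
    + lia.
    + lia.
    case: (ltnP u (2 * (v %/ 2) + 1)) => h'; [left|right]; apply/eqP; lia.
  by rewrite cards2 -val_eqE /= addn1 eqn_leq ltnn andbF.
have cC : forall A : {set 'I_n}, #|~: A| = n - #|A|.
  by move=> A; have := cardsC A; rewrite card_ord; lia.
have nbE : forall v, nb e v = ~: B v.
  by move=> v; apply/setP => u; rewrite !inE eE eq_sym.
have hdeg : forall v, #|nb e v| = r2.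
  by move=> v; rewrite nbE cC cB /n; lia.
move=> v; split; first exact: hdeg.
have := rowtri esym eirr v.
rewrite (eq_bigr (fun _ => r2 - 2)) ?sum_nat_const ?hdeg.
  have := bin2x (r2 %/ 2).
  have : r2 * (r2 - 2) = 4 * ((r2 %/ 2) * (r2 %/ 2 - 1)).
    move: hk; move: (r2 %/ 2) => k ->; case: k => [//|k]; rewrite !subn1 /=; nia.
  lia.
move=> a; rewrite inE eE => va.
have -> : (nb e v :\ a) :&: nb e a = ~: (B v :|: B a).
  apply/setP => q; rewrite !inE !eE.
  case: (eqVneq q a) => [->|qa]; first by rewrite eqxx andbF /= orbT.
  by rewrite negb_or ![_ %/ 2 == q %/ 2]eq_sym.
have hI : #|B v :&: B a| = 0.
  apply: eq_card0 => q; rewrite !inE; apply/negP => /andP [/eqP h1 /eqP h2].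
  by move: va; rewrite -h1 h2 eqxx.
have := cardsUI (B v) (B a); rewrite hI !cB addn0 => hU.
rewrite cC hU /n; lia.
Qed.

Lemma I2_three (s t u : 'I_2) : s != t -> s != u -> t != u -> False.
Proof.
case: s t u => [[|[|//]] ?] [[|[|//]] ?] [[|[|//]] ?]; by rewrite -!val_eqE.
Qed.

Lemma sum_pair (T1 T2 : finType) (F : T1 * T2 -> nat) :
  \sum_q F q = \sum_j \sum_t F (j, t).
Proof. by rewrite (pair_bigA _ (fun j t => F (j, t))); apply: eq_bigr => [[]]. Qed.

Lemma cart_params d (H2 : 2 <= d) :
  has_params (cartesian (complete_graph d) (complete_graph 2)) d 'C(d - 1, 2).
Proof.
set e := cartesian (complete_graph d) (complete_graph 2).
have eE : forall p q, e p q = ((p.1 == q.1) && (p.2 != q.2)) || ((p.2 == q.2) && (p.1 != q.1)).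
  by [].
have esym : symmetric e by move=> p q; rewrite !eE (eq_sym p.1) (eq_sym p.2).
have eirr : irreflexive e by move=> p; rewrite eE !eqxx.
have hdeg : forall v, #|nb e v| = d.
  move=> [i s]; rewrite card_nb_sum sum_pair.
  rewrite (eq_bigr (fun _ => 1)) ?sum_nat_const ?card_ord ?muln1 // => j _.
  case: (eqVneq i j) => [<-|nij].
  - rewrite (eq_bigr (fun t => (s != t : nat))) ?sum_neq ?card_ord // => t _.
    by rewrite eE /= eqxx andbF orbF.
  - rewrite (eq_bigr (fun t => (s == t : nat))) ?sum_eqv // => t _.
    by rewrite eE /= (negPf nij) andbT.
move=> v; split; first exact: hdeg.
case: v => i s.
have := rowtri esym eirr (i, s).
rewrite big_mkcond /= sum_pair.
rewrite (eq_bigr (fun j => (i != j) * (d - 2))).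
  rewrite -big_distrl /= sum_neq card_ord.
  have := bin2x (d - 1); have -> : d - 1 - 1 = d - 2 by lia.
  lia.
move=> j _; case: (eqVneq i j) => [<-|nij].
- rewrite mul0n big1 // => t _; rewrite inE.
  case: ifP => // ist; rewrite common_sum // big1 // => [[l u]] _.
  have st : s != t by move: ist; rewrite eE /= eqxx /= andbF orbF.
  rewrite !eE /=; apply/eqP; rewrite eqb0; case: (i == l); rewrite /= ?andbF ?orbF ?andbT ?orbT.
  + apply/negP => /andP [su tu]; exact: I2_three st su tu.
  + apply/negP => /andP [/eqP su /eqP tu]; move: st; by rewrite su tu eqxx.
- rewrite mul1n (eq_bigr (fun t => (t == s) * #|(nb e (i, s) :\ (j, t)) :&: nb e (j, t)|)).
    rewrite sum_eq1 common_sum // sum_pair.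
    rewrite (eq_bigr (fun l => ((i != l) && (j != l) : nat))).
      rewrite (_ : d - 2 = #|~: [set i; j]|); last by rewrite cardC2 ?card_ord.
      rewrite card_sumb; apply: eq_bigr => l _.
      by rewrite !inE negb_or (eq_sym l i) (eq_sym l j).
    move=> l _; rewrite (eq_bigr (fun u => (u == s) * ((i != l) && (j != l)))) ?sum_eq1 // => u _.
    rewrite !eE /= (eq_sym s u); case: (u == s) => /=; rewrite ?andbF ?andbT ?orbF ?mul1n ?mul0n.
      by case: (i != l); case: (j != l).
    apply/eqP; rewrite eqb0; apply/negP => /andP [/eqP il /eqP jl]; move: nij; by rewrite il jl eqxx.
  move=> t _; rewrite inE eE /= (negPf nij) /= andbT eq_sym.
  by case: (t == s); rewrite ?mul1n ?mul0n.
Qed.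

Unset Implicit Arguments.

Theorem corollary5p1 (r2 : nat) (Heven : ~~ odd r2) (H4 : 4 <= r2) :
  (forall r3 : nat,
      (4 * 'C(r2 %/ 2, 2) < r3 < 'C(r2, 2)) || ('C(r2 - 1, 2) < r3 < 4 * 'C(r2 %/ 2, 2)) ->
      forall (T : finType) (e : rel T), simple_graph e -> 0 < #|T| ->
        ~ has_params e r2 r3)
  /\ has_params (complete_graph r2.+1) r2 'C(r2, 2)
  /\ has_params (turan (r2 + 2) (r2 %/ 2 + 1)) r2 (4 * 'C(r2 %/ 2, 2))
  /\ has_params (cartesian (complete_graph r2) (complete_graph 2)) r2 'C(r2 - 1, 2).
Proof.
split; first exact: neg_part.
split; first exact: complete_params.
split; first exact: turan_params.
apply: cart_params; lia.
Qed.
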